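(* Let $R$ be a $*$-ring. Then the following are equivalent: (1) $R$ is strongly $J$-$*$-clean. (2) $R$ is strongly $J$-clean and strongly $*$-clean. (3) $R$ is abelian and $R$ is $J$-$*$-clean.
   Context: All rings are associative with identity. A $*$-ring is a ring $R$ with an involution $*$, i.e. a map $a\mapsto a^*$ with $(a+b)^*=a^*+b^*$, $(ab)^*=b^*a^*$, $(a^* )^*=a$. $U(R)$ denotes the group of units and $J(R)$ the Jacobson radical of $R$. A projection is an element $e$ with $e^2=e=e^*$. $R$ is strongly $J$-$*$-clean if every $a\in R$ can be written $a=e+u$ with $e$ a projection, $u\in J(R)$ and $ae=ea$. $R$ is strongly $J$-clean if every $a\in R$ can be written $a=e+u$ with $e$ an idempotent, $u\in J(R)$ and $ae=ea$. $R$ is strongly $*$-clean if every $a\in R$ can be written $a=e+u$ with $e$ a projection, $u\in U(R)$ and $eu=ue$. $R$ is $J$-$*$-clean if every element of $R$ is the sum of a projection and an element of $J(R)$ (no commutation required). A ring is abelian if all its idempotents are central. *)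

(* Defs.v *)
From HB Require Import structures.
From mathcomp Require Import all_boot all_order all_algebra.
Set Implicit Arguments. Unset Strict Implicit. Unset Printing Implicit Defensive.
Import GRing.Theory.
Local Open Scope ring_scope.

Definition is_involution (R : pzRingType) (s : R -> R) : Prop :=
  (forall a b : R, s (a + b) = s a + s b) /\
  (forall a b : R, s (a * b) = s b * s a) /\
  (forall a : R, s (s a) = a).

Definition is_unit (R : pzRingType) (u : R) : Prop :=
  exists v : R, u * v = 1 /\ v * u = 1.

(* J(R): Jacobson radical, via the standard characterization
   a \in J(R) <-> 1 - r a is a unit for every r. *)
Definition in_jacobson (R : pzRingType) (a : R) : Prop :=
  forall r : R, is_unit (1 - r * a).

Definition idempotent (R : pzRingType) (e : R) : Prop := e * e = e.

Definition projection (R : pzRingType) (s : R -> R) (e : R) : Prop :=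
  e * e = e /\ s e = e.

Definition strongly_J_star_clean (R : pzRingType) (s : R -> R) : Prop :=
  forall a : R, exists e u : R,
    a = e + u /\ projection s e /\ in_jacobson u /\ a * e = e * a.

Definition strongly_J_clean (R : pzRingType) : Prop :=
  forall a : R, exists e u : R,
    a = e + u /\ idempotent e /\ in_jacobson u /\ a * e = e * a.

Definition strongly_star_clean (R : pzRingType) (s : R -> R) : Prop :=
  forall a : R, exists e u : R,
    a = e + u /\ projection s e /\ is_unit u /\ e * u = u * e.

Definition J_star_clean (R : pzRingType) (s : R -> R) : Prop :=
  forall a : R, exists e u : R,
    a = e + u /\ projection s e /\ in_jacobson u.

Definition abelian_ring (R : pzRingType) : Prop :=
  forall e : R, idempotent e -> forall x : R, e * x = x * e.

(* Main.v *)
Require Import Defs.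
From mathcomp Require Import all_boot all_order all_algebra.
Import GRing.Theory.
Local Open Scope ring_scope.
Set Implicit Arguments.

Lemma unit_cancel (R : pzRingType) (w x : R) : is_unit w -> w * x = 0 -> x = 0.
Proof. by move=> [v [_ hv]] h; rewrite -(mul1r x) -hv -mulrA h mulr0. Qed.

Lemma comm_unit (R : pzRingType) (f e : R) : f * f = f -> e * e = e -> f * e = e * f ->
  is_unit (f - e) -> f = 1 - e.
Proof.
move=> hf he hc hu.
have h0 : f * e = 0.
  apply: (unit_cancel _ hu); by rewrite mulrBl mulrA hf mulrA -hc -mulrA he subrr.
have : 1 - f - e = 0.
  apply: (unit_cancel _ hu).
  rewrite !mulrBr mulr1 mulrBl mulrBl hf h0 -hc h0 he !subr0 sub0r opprK.
  by rewrite addrAC subrK subrr.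
by rewrite addrAC => /subr0_eq ->.
Qed.

Lemma comm_jac (R : pzRingType) (g e : R) : g * g = g -> e * e = e -> g * e = e * g ->
  in_jacobson (g - e) -> g = e.
Proof.
move=> hg he hc hu.
have gge : g * (g * e) = g * e by rewrite mulrA hg.
have ege : e * (g * e) = g * e by rewrite mulrA -hc -mulrA he.
have h1 : g - g * e = 0.
  have u1 := hu 1; rewrite mul1r in u1.
  apply: (unit_cancel _ u1).
  rewrite mulrBl mul1r !mulrBl !mulrBr hg gge ege -hc.
  by rewrite subrr subr0 subrr.
have h2 : e - g * e = 0.
  have u1 := hu (-1); rewrite mulN1r opprK in u1.
  apply: (unit_cancel _ u1).
  rewrite mulrDl mul1r !mulrBr !mulrBl he gge ege.
  by rewrite subrr subr0 addrA subrK subrr.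
move/eqP: h1; rewrite subr_eq0 => /eqP ->.
by move/eqP: h2; rewrite subr_eq0 => /eqP <-.
Qed.

Lemma s_one (R : pzRingType) (s : R -> R) : is_involution s -> s 1 = 1.
Proof.
move=> [hA [hM hI]].
by rewrite -[s 1]mulr1 -{2}(hI 1) -hM mulr1 hI.
Qed.

Lemma s_compl (R : pzRingType) (s : R -> R) (e : R) : is_involution s -> s (1 - e) = 1 - s e.
Proof.
move=> hs; have h1 := s_one hs; case: hs => [hA _].
by apply/eqP; rewrite eq_sym subr_eq -hA subrK h1.
Qed.

Lemma abel (R : pzRingType) (s : R -> R) : is_involution s ->
  (forall g : R, Defs.idempotent g -> s g = g) -> abelian_ring R.
Proof.
move=> hs hP g hg x.
have h1 := s_one hs; have hc := s_compl _ hs; case: hs => [hA [hM hI]].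
rewrite /Defs.idempotent in hg.
have g1 : g * (1 - g) = 0 by rewrite mulrBr mulr1 hg subrr.
have g2 : (1 - g) * g = 0 by rewrite mulrBl mul1r hg subrr.
have k1 : g * x * (1 - g) = 0.
  have : Defs.idempotent (g + g * x * (1 - g)).
    set y := g * x * (1 - g).
    have gy : g * y = y by rewrite /y !mulrA hg.
    have yg : y * g = 0 by rewrite /y -mulrA g2 mulr0.
    have yy : y * y = 0 by rewrite {2}/y !mulrA yg !mul0r.
    by rewrite /Defs.idempotent mulrDl !mulrDr hg gy yg yy addr0 addr0.
  move/hP; rewrite hA !hM hc (hP g hg) => /addrI h.
  have := congr1 (fun y => g * y) h.
  by rewrite !mulrA g1 !mul0r hg => <-.
have k2 : (1 - g) * x * g = 0.
  have : Defs.idempotent (g + (1 - g) * x * g).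
    set y := (1 - g) * x * g.
    have gy : g * y = 0 by rewrite /y !mulrA g1 !mul0r.
    have yg : y * g = y by rewrite /y -mulrA hg.
    have y1 : y * (1 - g) = 0 by rewrite /y -mulrA g1 mulr0.
    have yy : y * y = 0 by rewrite {2}/y !mulrA y1 !mul0r.
    by rewrite /Defs.idempotent mulrDl !mulrDr hg gy yg yy !addr0.
  move/hP; rewrite hA !hM hc (hP g hg) => /addrI h.
  have := congr1 (fun y => (1 - g) * y) h.
  have g3 : (1 - g) * (1 - g) = 1 - g by rewrite mulrBr mulr1 g2 subr0.
  by rewrite !mulrA g2 !mul0r g3 => <-.
move: k1; rewrite mulrBr mulr1 => /subr0_eq ->.
move: k2; rewrite !mulrBl !mul1r => /subr0_eq <-.
by [].
Qed.

Lemma unit_mul (R : pzRingType) (a b : R) : is_unit a -> is_unit b -> is_unit (a * b).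
Proof.
move=> [va [ha1 ha2]] [vb [hb1 hb2]]; exists (vb * va); split.
  by rewrite -mulrA [b * (vb * va)]mulrA hb1 mul1r ha1.
by rewrite -mulrA [va * (a * b)]mulrA ha2 mul1r hb2.
Qed.

Lemma comm_compl (R : pzRingType) (e x : R) : e * x = x * e -> (1 - e) * x = x * (1 - e).
Proof. by move=> h; rewrite mulrBl mulrBr mul1r mulr1 h. Qed.

Lemma proj_compl (R : pzRingType) (s : R -> R) (e : R) : is_involution s ->
  projection s e -> projection s (1 - e).
Proof.
move=> hs [he se]; split; last by rewrite s_compl // se.
by rewrite mulrBr mulr1 mulrBl mul1r he subrr subr0.
Qed.

Lemma tt_lem (R : pzRingType) (e : R) : e * e = e -> (e + e - 1) * (e + e - 1) = 1.
Proof.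
move=> he; rewrite mulrBr mulr1 mulrBl mul1r !mulrDl !mulrDr he.
by rewrite addrK opprB addrC subrK.
Qed.

Section Main.
Variables (R : pzRingType) (s : R -> R).
Hypothesis hs : is_involution s.

Lemma i1_star : strongly_J_star_clean s -> strongly_star_clean s.
Proof.
move=> H a.
case: (H a) => e [u [ha [[he se] [hu hae]]]].
have heu : e * u = u * e.
  move: hae; rewrite ha mulrDl mulrDr he => /addrI ->. by [].
set t := e + e - 1.
have tt : t * t = 1 by rewrite /t; apply: tt_lem.
have te : e * t = t * e by rewrite /t mulrBr mulrDr he mulr1 mulrBl mulrDl he mul1r.
exists (1 - e), (t + u); split.
  rewrite ha /t !addrA; congr (_ + _).
  by rewrite subrK addrAC subrr add0r.
split; first exact: proj_compl.
split.
  have -> : t + u = t * (1 - (- t) * u) by rewrite mulNr opprK mulrDr mulr1 mulrA tt mul1r.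
  apply: unit_mul; last exact: hu.
  by exists t.
apply: comm_compl.
by rewrite mulrDr mulrDl te heu.
Qed.

Lemma i1_proj : strongly_J_star_clean s -> forall g : R, Defs.idempotent g -> s g = g.
Proof.
move=> H g hg.
case: (H g) => e [u [ha [[he se] [hu hae]]]].
have hu' : in_jacobson (g - e) by rewrite ha addrC addKr.
by rewrite (comm_jac hg he hae hu') se.
Qed.

Lemma istar_proj : strongly_star_clean s -> forall g : R, Defs.idempotent g -> s g = g.
Proof.
move=> H g hg.
case: (H g) => e [u [ha [[he se] [hu heu]]]].
have hu' : is_unit (g - e) by rewrite ha addrC addKr.
have hge : g * e = e * g by rewrite ha mulrDl mulrDr he heu.
by rewrite (comm_unit hg he hge hu') s_compl // se.
Qed.

End Main.

Theorem proposition2p1 (R : pzRingType) (s : R -> R) (Hs : is_involution s) :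
  (strongly_J_star_clean s <-> strongly_J_clean R /\ strongly_star_clean s) /\
  (strongly_J_star_clean s <-> abelian_ring R /\ J_star_clean s).
Proof.
split; split.
- move=> H; split; last exact: i1_star.
  move=> a; case: (H a) => e [u [ha [[he se] [hu hae]]]].
  by exists e, u.
- case=> HJ HS a; case: (HJ a) => e [u [ha [he [hu hae]]]].
  exists e, u; split=> //; split=> //; split=> //.
  exact: istar_proj.
- move=> H; split; first by apply: (abel Hs); exact: i1_proj.
  move=> a; case: (H a) => e [u [ha [pe [hu hae]]]].
  by exists e, u.
- case=> HA HJ a; case: (HJ a) => e [u [ha [[he se] hu]]].
  exists e, u; split=> //; split=> //; split=> //.
  by rewrite (HA e he).
Qed.
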